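(* Let $k\ge 2$ be an integer and let $G_k$ be a connected triangle-free graph with chromatic number $k$, with vertices $v_1,\dots,v_n$. Let $H_k=G_k\boxtimes K_2$ be the graph obtained from $G_k$ by replacing each vertex $v_i$ by two adjacent vertices $x_i,y_i$ and each edge $v_iv_j$ of $G_k$ by a copy of $K_4$ on $\{x_i,y_i,x_j,y_j\}$ (and no other edges). Then: (i) $W^-(H_k,K_3)=2$; (ii) for every integer $s\ge k$, the $K_3$-WORM colorings of $H_k$ using $s$ colors in which $x_1$ and $y_1$ receive the same color are in one-to-one correspondence with the proper vertex colorings of $G_k$ using $s$ colors (namely, in each such coloring every pair $\{x_i,y_i\}$ is monochromatic, and giving $v_i$ the color of $\{x_i,y_i\}$ yields the correspondence); (iii) if $k\ge 4$ and $3\le t\le k-1$, then $H_k$ admits no $K_3$-WORM coloring using exactly $t$ colors.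
   Context: A $K_3$-WORM coloring of a graph $G$ is an assignment of colors to the vertices of $G$ such that no triangle ($K_3$-subgraph) of $G$ is monochromatic or rainbow; equivalently, the three vertices of every triangle receive exactly two distinct colors. For a graph $G$ admitting such a coloring, $W^-(G,K_3)$ denotes the minimum number of colors used in a $K_3$-WORM coloring of $G$. *)

(* Defs.v *)
From mathcomp Require Import all_boot.
Set Implicit Arguments. Unset Strict Implicit. Unset Printing Implicit Defensive.

Definition simple_graph (V : finType) (e : rel V) : Prop :=
  symmetric e /\ irreflexive e.

Definition connected_graph (V : finType) (e : rel V) : Prop :=
  forall u v : V, connect e u v.

Definition triangle_free (V : finType) (e : rel V) : Prop :=
  forall u v w : V, ~ [&& e u v, e v w & e u w].

Definition proper_coloring (V : finType) (C : Type) (e : rel V) (f : V -> C) : Prop :=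
  forall u v : V, e u v -> f u <> f v.

Definition chromatic_number_eq (V : finType) (e : rel V) (k : nat) : Prop :=
  (exists f : V -> 'I_k, proper_coloring e f) /\
  (forall j, j < k -> ~ exists f : V -> 'I_j, proper_coloring e f).

(* strong product G ⊠ K_2: vertex v_i becomes (v_i,false) = x_i, (v_i,true) = y_i *)
Definition strongK2 (V : finType) (e : rel V) : rel (V * bool) :=
  fun p q => ((p.1 == q.1) && (p.2 != q.2)) || e p.1 q.1.

Definition K3_worm (T : finType) (C : eqType) (e : rel T) (c : T -> C) : Prop :=
  forall x y z : T, e x y -> e y z -> e x z ->
    ((c x == c y) || (c y == c z) || (c x == c z)) /\
    ~ ((c x == c y) && (c y == c z)).

Definition ncolors (T : finType) (c : T -> nat) : nat :=
  size (undup [seq c x | x <- enum T]).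

Definition Wminus_K3_eq (T : finType) (e : rel T) (m : nat) : Prop :=
  (exists c : T -> nat, K3_worm e c /\ ncolors c = m) /\
  (forall c : T -> nat, K3_worm e c -> m <= ncolors c).

(* Main.v *)
Require Import Defs.
From mathcomp Require Import all_boot zify.
Set Implicit Arguments. Unset Strict Implicit.
Definition ex2 (C : eqType) (a b c : C) : bool :=
  ((a == b) || (b == c) || (a == c)) && ~~ ((a == b) && (b == c)).

Lemma ex2_213 (C : eqType) (a b c : C) : ex2 a b c = ex2 b a c.
Proof.
rewrite /ex2 (eq_sym b a); case: (a =P b) => [->|_] //=.
by rewrite orbC.
Qed.

Lemma ex2_132 (C : eqType) (a b c : C) : ex2 a b c = ex2 a c b.
Proof.
rewrite /ex2 (eq_sym c b); case: (b =P c) => [->|_] /=; first by rewrite andbC orbC.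
rewrite andbF orbF andbT; by case: (a == b); case: (a == c).
Qed.

Lemma wormE (T : finType) (C : eqType) (e : rel T) (c : T -> C) :
  K3_worm e c <-> forall x y z, e x y -> e y z -> e x z -> ex2 (c x) (c y) (c z).
Proof.
split=> H x y z exy eyz exz; have := H x y z exy eyz exz.
  by case=> h1 /negP h2; rewrite /ex2 h1 h2.
by case/andP=> h1 /negP h2.
Qed.

Lemma tri_shape (V : finType) (e : rel V) (x y z : V * bool) :
  simple_graph e -> triangle_free e ->
  strongK2 e x y -> strongK2 e y z -> strongK2 e x z ->
  [\/ x.1 = y.1 /\ x.2 != y.2 /\ e x.1 z.1,
      y.1 = z.1 /\ y.2 != z.2 /\ e y.1 x.1 |
      x.1 = z.1 /\ x.2 != z.2 /\ e x.1 y.1].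
Proof.
case=> sym irr tf.
case: x y z => [x1 x2] [y1 y2] [z1 z2]; rewrite /strongK2 /=.
move=> /orP[/andP[/eqP exy nxy] | exy] /orP[/andP[/eqP eyz nyz]| eyz]
       /orP[/andP[/eqP exz nxz]|exz].
- by move: nxy nyz nxz; case: x2; case: y2; case: z2.
- by subst; rewrite irr in exz.
- by subst; rewrite irr in eyz.
- by constructor 1.
- by subst; rewrite irr in exy.
- by constructor 2; rewrite sym.
- by constructor 3.
- by case: (tf x1 y1 z1); rewrite exy eyz exz.
Qed.

Lemma worm_char (V : finType) (e : rel V) (C : eqType) (c : V * bool -> C) :
  simple_graph e -> triangle_free e ->
  (forall u w b, e u w -> ex2 (c (u, false)) (c (u, true)) (c (w, b))) ->
  K3_worm (strongK2 e) c.
Proof.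
move=> sg tf H; apply/wormE => x y z exy eyz exz.
have key : forall p q r : V * bool, p.1 = q.1 -> p.2 != q.2 -> e p.1 r.1 ->
   ex2 (c p) (c q) (c r).
  case=> [p1 p2] [q1 q2] [r1 r2] /= <-; case: p2; case: q2 => //= _ epr.
    by rewrite ex2_213; apply: H.
  by apply: H.
case: (tri_shape sg tf exy eyz exz) => [[h1 [h2 h3]]|[h1 [h2 h3]]|[h1 [h2 h3]]].
- exact: key.
- by rewrite ex2_213 ex2_132; apply: key.
- by rewrite ex2_132; apply: key.
Qed.

Lemma worm_tri (V : finType) (e : rel V) (C : eqType) (c : V * bool -> C) u w b :
  K3_worm (strongK2 e) c -> e u w -> ex2 (c (u, false)) (c (u, true)) (c (w, b)).
Proof.
move/wormE=> H euw; apply: H; rewrite /strongK2 /= ?eqxx ?euw ?orbT //.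
Qed.

Lemma propagate (V : finType) (e : rel V) (P : V -> Prop) :
  (forall u v, e u v -> P u -> P v) -> forall u v, connect e u v -> P u -> P v.
Proof.
move=> H u v /connectP [p]; elim: p u => [|w p IH] u /=; first by move=> _ ->.
by case/andP=> euw pw hv Pu; apply: (IH w pw hv); exact: H euw Pu.
Qed.
Lemma ex2_aa (C : eqType) (a p : C) : ex2 a a p = (a != p).
Proof. by rewrite /ex2 eqxx /=; case: (a == p). Qed.

Lemma mono_step (V : finType) (e : rel V) (C : eqType) (c : V * bool -> C) u v :
  symmetric e -> K3_worm (strongK2 e) c -> e u v -> c (u, false) = c (u, true) ->
  c (v, false) = c (v, true) /\ c (u, false) <> c (v, false).
Proof.
move=> sym W euv Hu.
have h1 := worm_tri false W euv; have h2 := worm_tri true W euv.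
have h3 := worm_tri false W (etrans (sym v u) euv).
rewrite -Hu ex2_aa in h1; rewrite -Hu ex2_aa in h2.
split; last by apply/eqP.
rewrite eq_sym in h2; rewrite eq_sym in h1.
move: h3; rewrite /ex2 (negbTE h2) (negbTE h1).
by rewrite !orbF => /andP [/eqP].
Qed.

Lemma ncolors_ge2 (T : finType) (c : T -> nat) x y : c x != c y -> 2 <= ncolors c.
Proof.
move=> nxy; rewrite /ncolors.
have -> : 2 = size [:: c x; c y] by [].
apply: uniq_leq_size; first by rewrite /= inE nxy.
by move=> z; rewrite !inE => /orP [] /eqP ->; rewrite mem_undup map_f ?mem_enum.
Qed.

Lemma ncolors_le (T : finType) (c : T -> nat) (s : seq nat) :
  (forall x, c x \in s) -> ncolors c <= size s.
Proof.
move=> H; apply: uniq_leq_size; first exact: undup_uniq.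
by move=> z; rewrite mem_undup => /mapP [x _ ->].
Qed.

Lemma ncolors_coloring (T : finType) (c : T -> nat) :
  exists g : T -> 'I_(ncolors c), forall x y, g x = g y -> c x = c y.
Proof.
set L := undup [seq c x | x <- enum T].
have HL : forall x, index (c x) L < ncolors c.
  by move=> x; rewrite index_mem mem_undup map_f ?mem_enum.
exists (fun x => Ordinal (HL x)) => x y [] h.
have Hm : forall z, c z \in L by move=> z; rewrite mem_undup map_f ?mem_enum.
by rewrite -(nth_index 0 (Hm x)) h nth_index.
Qed.
Lemma ex2_neq (C : eqType) (p q r : C) : p != q -> ex2 p q r -> (r == p) || (r == q).
Proof.
move=> pq; rewrite /ex2 (negbTE pq) /= => /andP [/orP [h|h] _].
  by rewrite (eq_sym r q) h orbT.
by rewrite (eq_sym r p) h.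
Qed.

Theorem mainTheorem2 (k : nat) (V : finType) (e : rel V) :
  2 <= k ->
  simple_graph e -> connected_graph e -> triangle_free e ->
  chromatic_number_eq e k ->
  (* (i) *)
  Wminus_K3_eq (strongK2 e) 2 /\
  (* (ii) *)
  (forall (s : nat) (v1 : V), k <= s ->
     (forall c : V * bool -> 'I_s,
        K3_worm (strongK2 e) c -> c (v1, false) = c (v1, true) ->
        (forall v, c (v, false) = c (v, true)) /\
        proper_coloring e (fun v => c (v, false))) /\
     (forall f : V -> 'I_s, proper_coloring e f ->
        exists c : V * bool -> 'I_s,
          [/\ K3_worm (strongK2 e) c, c (v1, false) = c (v1, true) &
              forall v b, c (v, b) = f v])) /\
  (* (iii) *)
  (4 <= k -> forall t, 3 <= t <= k - 1 ->
     ~ exists c : V * bool -> nat, K3_worm (strongK2 e) c /\ ncolors c = t).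
Proof.
move=> k2 sg conn tf [[f0 Hf0] Hchi].
have [sym irr] := sg.
have [u0 [w0 euw0]] : exists u w, e u w.
  case: (boolP [exists u, exists w, e u w]) => [/existsP [u /existsP [w h]]|hn].
    by exists u, w.
  exfalso; apply: (Hchi 1 k2); exists (fun _ => ord0) => u v euv.
  by case/negP: hn; apply/existsP; exists u; apply/existsP; exists v.
have mono_all : forall (C : eqType) (c : V * bool -> C) v1,
    K3_worm (strongK2 e) c -> c (v1, false) = c (v1, true) ->
    forall v, c (v, false) = c (v, true).
  move=> C c v1 W H1 v.
  apply: (@propagate V e (fun v => c (v, false) = c (v, true)) _ v1 v (conn v1 v) H1).
  by move=> a b eab Ha; exact: (mono_step sym W eab Ha).1.
have mono_proper : forall (C : eqType) (c : V * bool -> C),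
    K3_worm (strongK2 e) c -> (forall v, c (v, false) = c (v, true)) ->
    proper_coloring e (fun v => c (v, false)).
  by move=> C c W Hall u v euv; exact: (mono_step sym W euv (Hall u)).2.
split.
  split.
    exists (fun p : V * bool => nat_of_bool p.2); split.
      by apply: worm_char => // u w b euw; case: b.
    apply/eqP; rewrite eqn_leq; apply/andP; split.
      by apply: (ncolors_le (s := [:: 0; 1])) => -[x []].
    exact: (ncolors_ge2 (x := (u0, false)) (y := (u0, true))).
  move=> c W; have := worm_tri false W euw0; rewrite /ex2 => /andP [_].
  by rewrite negb_and => /orP [h|h]; exact: ncolors_ge2 h.
split.
  move=> s v1 ks; split.
    move=> c W H1; have Hall := mono_all _ c v1 W H1.
    by split => //; exact: mono_proper.
  move=> f pf; exists (fun p => f p.1); split => //.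
  apply: worm_char => // u w b euw /=; rewrite ex2_aa; apply/eqP; exact: pf.
move=> k4 t /andP [t3 tk] [c [W Hn]].
case: (boolP [exists v, c (v, false) == c (v, true)]) => [/existsP [v /eqP hv]|hn].
  have Hall := mono_all _ c v W hv; have Hp := mono_proper _ c W Hall.
  have [g Hg] := ncolors_coloring c.
  have ltk : t < k by lia.
  apply: (Hchi t ltk); subst t.
  exists (fun v => g (v, false)) => a b eab hg.
  by apply: (Hp a b eab); exact: Hg.
move/existsPn: hn => hn.
pose a := c (u0, false); pose b := c (u0, true).
have HP : forall v, (c (v, false) = a /\ c (v, true) = b) \/ (c (v, false) = b /\ c (v, true) = a).
  move=> v.
  apply: (@propagate V e (fun v => (c (v, false) = a /\ c (v, true) = b) \/ (c (v, false) = b /\ c (v, true) = a)) _ u0 v (conn u0 v)); last by left.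
  move=> x y exy Hx.
  have h1 := ex2_neq (hn x) (worm_tri false W exy).
  have h2 := ex2_neq (hn x) (worm_tri true W exy).
  have h3 := hn y.
  move: h1 h2 h3 => /orP [] /eqP h1 /orP [] /eqP h2 /eqP h3; lia.
have : ncolors c <= size [:: a; b].
  apply: ncolors_le => -[v []]; rewrite !inE; by case: (HP v) => -[h1 h2]; rewrite ?h1 ?h2 eqxx ?orbT.
move=> /= h; lia.
Qed.
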